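(* Let $n\ge 3$. For every set $S$ of $n$ red and blue points in the plane in general position containing at least one point of each color, every edge of every minimum bichromatic spanning tree of $S$ crosses at most $n-3$ other edges of that tree. Moreover, this bound is best possible: for every $n\ge 3$ there exists a set of $n$ red and blue points in general position having a minimum bichromatic spanning tree in which some edge crosses exactly $n-3$ other edges.
   Context: A set of points is in general position if no three of them are collinear. A bichromatic spanning tree of a set $S$ of red and blue points is a spanning tree on vertex set $S$, drawn with straight-line segment edges, in which every edge has one red and one blue endpoint. A minimum bichromatic spanning tree (MinBST) is a bichromatic spanning tree of minimum total Euclidean edge length. Two edges (segments) cross if they share a point that is interior to both segments. *)

(* Defs.v *)
From HB Require Import structures.
From mathcomp Require Import all_boot all_order all_algebra.
From mathcomp Require Import boolp reals.
Set Implicit Arguments. Unset Strict Implicit. Unset Printing Implicit Defensive.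
Import Order.TTheory GRing.Theory Num.Theory.
Local Open Scope ring_scope.

Section Defs.
Variable R : realType.
Definition point := (R * R)%type.

Definition dist (a b : point) : R := Num.sqrt ((a.1 - b.1) ^+ 2 + (a.2 - b.2) ^+ 2).

(* orientation determinant; zero iff a, b, c collinear *)
Definition orient (a b c : point) : R :=
  (b.1 - a.1) * (c.2 - a.2) - (b.2 - a.2) * (c.1 - a.1).

Variable n : nat.

Definition general_position (p : 'I_n -> point) : Prop :=
  injective p /\
  forall i j k : 'I_n, i != j -> j != k -> i != k -> orient (p i) (p j) (p k) != 0.

Definition seg_cross (a b c d : point) : Prop :=
  exists s t : R, [/\ 0 < s < 1, 0 < t < 1,
    a.1 + s * (b.1 - a.1) = c.1 + t * (d.1 - c.1) &
    a.2 + s * (b.2 - a.2) = c.2 + t * (d.2 - c.2)].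

(* A bichromatic edge set on vertices 'I_n with colouring col (true = red):
   each edge is stored once, as the ordered pair (red endpoint, blue endpoint). *)
Definition bichromatic (col : 'I_n -> bool) (E : {set 'I_n * 'I_n}) : Prop :=
  forall e, e \in E -> col e.1 /\ ~~ col e.2.

Definition adj (E : {set 'I_n * 'I_n}) : rel 'I_n :=
  fun i j => ((i, j) \in E) || ((j, i) \in E).

Definition connected_graph (E : {set 'I_n * 'I_n}) : Prop :=
  forall i j : 'I_n, connect (adj E) i j.

(* acyclic: every edge is a bridge, i.e. lies on no cycle *)
Definition acyclic (E : {set 'I_n * 'I_n}) : Prop :=
  forall e, e \in E -> ~~ connect (adj (E :\ e)) e.1 e.2.

Definition spanning_tree (E : {set 'I_n * 'I_n}) : Prop :=
  connected_graph E /\ acyclic E.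

Definition bst (col : 'I_n -> bool) (E : {set 'I_n * 'I_n}) : Prop :=
  bichromatic col E /\ spanning_tree E.

Definition weight (p : 'I_n -> point) (E : {set 'I_n * 'I_n}) : R :=
  \sum_(e in E) dist (p e.1) (p e.2).

Definition min_bst (p : 'I_n -> point) (col : 'I_n -> bool)
    (E : {set 'I_n * 'I_n}) : Prop :=
  bst col E /\ forall E', bst col E' -> weight p E <= weight p E'.

Definition crossings (p : 'I_n -> point) (E : {set 'I_n * 'I_n}) (e : 'I_n * 'I_n) : nat :=
  #|[set f in E | (f != e) && `[< seg_cross (p e.1) (p e.2) (p f.1) (p f.2) >]]|.

End Defs.

(* Main.v *)
Require Import Defs.
From HB Require Import structures.
From mathcomp Require Import all_boot all_order all_algebra.
From mathcomp Require Import boolp reals.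
From mathcomp Require Import zify ring lra.
Import Order.TTheory GRing.Theory Num.Theory.
Set Implicit Arguments. Unset Strict Implicit. Unset Printing Implicit Defensive.

Section G.
Variable T : finType.

Lemma merge_connect (r r' : rel T) a b x y :
  (forall u v, r' u v -> [|| r u v, (u == a) && (v == b) | (u == b) && (v == a)]) ->
  connect r' x y ->
  [|| connect r x y, connect r x a && connect r b y | connect r x b && connect r a y].
Proof.
move=> H /connectP [p]; elim: p x => [|z p IH] x /=; first by move=> _ ->; rewrite connect0.
case/andP=> hxz hp hy; have := IH z hp hy.
have [hr|] := boolP (r x z).
  by case/or3P=> [h|/andP[h1 h2]|/andP[h1 h2]]; apply/or3P;
    [constructor 1|constructor 2|constructor 3]; rewrite ?(connect_trans (connect1 hr)) ?h1 ?h2.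
move: (H _ _ hxz) => /or3P [->//|/andP[/eqP-> /eqP->]|/andP[/eqP-> /eqP->]] _.
  case/or3P=> [h|/andP[h1 h2]|/andP[h1 h2]]; apply/or3P.
  - by constructor 2; rewrite connect0.
  - by constructor 2; rewrite connect0.
  - by constructor 1.
case/or3P=> [h|/andP[h1 h2]|/andP[h1 h2]]; apply/or3P.
- by constructor 3; rewrite connect0.
- by constructor 1.
- by constructor 3; rewrite connect0.
Qed.

Lemma merge_card (r r' : rel T) a b :
  connect_sym r -> connect_sym r' -> (forall u v, r u v -> r' u v) ->
  (forall u v, r' u v -> [|| r u v, (u == a) && (v == b) | (u == b) && (v == a)]) ->
  r' a b -> ~~ connect r a b ->
  #|[set fingraph.root r x | x : T]| = (#|[set fingraph.root r' x | x : T]|).+1.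
Proof.
move=> sr sr' H1 H2 hab nab.
have sub x y : connect r x y -> connect r' x y.
  by apply: connect_sub => u v /H1 /connect1.
set rb := fingraph.root r b.
have rbin : rb \in [set fingraph.root r x | x : T] by apply: imset_f.
have -> : [set fingraph.root r' x | x : T] = [set fingraph.root r' u | u in [set fingraph.root r x | x : T] :\ rb].
  apply/setP=> z; apply/imsetP/imsetP => [[x _ ->]|[u /setD1P[_ /imsetP[x _ ->]] ->]].
  - have e1 : fingraph.root r' x = fingraph.root r' (fingraph.root r x).
      by apply/(fingraph.rootP sr'); apply: sub; exact: connect_root.
    have [hx|hx] := eqVneq (fingraph.root r x) rb.
      exists (fingraph.root r a).
        rewrite !inE imset_f // andbT; apply/negP => /eqP/(fingraph.rootP sr) h.
        by rewrite h in nab.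
      rewrite e1 hx; apply/(fingraph.rootP sr'); rewrite /rb.
      apply: (connect_trans (y:=b)); first by rewrite sr'; apply: sub; exact: connect_root.
      apply: (connect_trans (y:=a)); first by rewrite sr'; apply: connect1.
      by apply: sub; exact: connect_root.
    by exists (fingraph.root r x) => //; rewrite !inE hx imset_f.
  - by exists (fingraph.root r x).
rewrite card_in_imset; first by rewrite (cardsD1 rb) rbin.
move=> u v /setD1P[hu /imsetP[x _ ex]] /setD1P[hv /imsetP[y _ ey]] /(fingraph.rootP sr') huv.
have ru : fingraph.root r u = u by rewrite ex fingraph.root_root.
have rv : fingraph.root r v = v by rewrite ey fingraph.root_root.
case/or3P: (merge_connect H2 huv) => [h|/andP[h1 h2]|/andP[h1 h2]].
- by rewrite -ru -rv; apply/(fingraph.rootP sr).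
- have : fingraph.root r v = rb by apply/(fingraph.rootP sr); rewrite sr.
  by rewrite rv => eq; rewrite eq eqxx in hv.
- have : fingraph.root r u = rb by apply/(fingraph.rootP sr).
  by rewrite ru => eq; rewrite eq eqxx in hu.
Qed.

End G.

Lemma adj_sym n (F : {set 'I_n * 'I_n}) : connect_sym (adj F).
Proof. by apply: sym_connect_sym => x y; rewrite /adj orbC. Qed.

Lemma adj_sub n (A B : {set 'I_n * 'I_n}) x y :
  A \subset B -> connect (adj A) x y -> connect (adj B) x y.
Proof.
move=> sAB; apply: connect_sub => u v; rewrite /adj => /orP[h|h]; apply: connect1;
by rewrite /adj (subsetP sAB _ h) ?orbT.
Qed.

Lemma acyclic_sub n (A B : {set 'I_n * 'I_n}) : A \subset B -> acyclic B -> acyclic A.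
Proof.
move=> sAB hB g gA; apply/negP => /(adj_sub (B := B :\ g)) h.
have := hB g (subsetP sAB _ gA); rewrite h //.
by apply/subsetP => x; rewrite !inE => /andP[-> /(subsetP sAB)].
Qed.

Lemma forest_card n (F : {set 'I_n * 'I_n}) :
  acyclic F -> #|F| + #|[set fingraph.root (adj F) x | x : 'I_n]| = n.
Proof.
move: {2}#|F| (erefl #|F|) => k; elim: k F => [|k IH] F hk hF.
  have -> : F = set0 by apply/cards0_eq.
  rewrite cards0 add0n card_imset ?card_ord // => x y /(fingraph.rootP (adj_sym _)).
  case/connectP => [[|z p]] /=; first by move=> _ ->.
  by rewrite /adj !inE.
have : 0 < #|F| by rewrite hk.
case/card_gt0P => f fF.
have hk' : #|F :\ f| = k by move: hk; rewrite (cardsD1 f F) fF add1n => -[].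
have hF' : acyclic (F :\ f) by apply: (acyclic_sub _ hF); apply: subD1set.
have := IH _ hk' hF'.
rewrite (@merge_card _ (adj (F :\ f)) (adj F) f.1 f.2 (adj_sym _) (adj_sym _)).
- by rewrite hk' hk addSnnS.
- by move=> u v; rewrite /adj !inE => /orP[/andP[_ ->]|/andP[_ ->]]; rewrite ?orbT.
- move=> u v; rewrite /adj !inE.
  case: (eqVneq (u, v) f) => [<-|ne1]; first by rewrite !eqxx !orbT.
  case: (eqVneq (v, u) f) => [<-|ne2]; first by rewrite !eqxx !orbT.
  by rewrite /= => ->.
- by rewrite /adj -surjective_pairing fF.
- exact: hF.
Qed.

Local Open Scope ring_scope.
Section Geo.
Variable R : realType.

Lemma cross_shared1 (a b c : point R) : seg_cross a b a c -> orient a b c = 0.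
Proof.
case=> s [t [/andP[s0 _] _ e1 e2]].
have e1' : s * (b.1 - a.1) = t * (c.1 - a.1) by apply: (addrI a.1).
have e2' : s * (b.2 - a.2) = t * (c.2 - a.2) by apply: (addrI a.2).
have : s * orient a b c = 0.
  have -> : s * orient a b c = (s * (b.1 - a.1)) * (c.2 - a.2) - (s * (b.2 - a.2)) * (c.1 - a.1).
    by rewrite /orient; ring.
  by rewrite e1' e2'; ring.
by move/eqP; rewrite mulf_eq0 gt_eqF //= => /eqP.
Qed.

Lemma cross_shared2 (a b c : point R) : seg_cross a b c b -> orient a b c = 0.
Proof.
case=> s [t [/andP[_ s1] _ e1 e2]].
have e1' : (1 - s) * (b.1 - a.1) = (1 - t) * (b.1 - c.1).
  by rewrite !mulrBl !mul1r; move: e1; lra.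
have e2' : (1 - s) * (b.2 - a.2) = (1 - t) * (b.2 - c.2).
  by rewrite !mulrBl !mul1r; move: e2; lra.
have : (1 - s) * orient a b c = 0.
  have -> : (1 - s) * orient a b c =
     ((1 - s) * (b.2 - a.2)) * (b.1 - c.1) - ((1 - s) * (b.1 - a.1)) * (b.2 - c.2).
    by rewrite /orient; ring.
  by rewrite e1' e2'; ring.
by move/eqP; rewrite mulf_eq0 subr_eq0 eq_sym lt_eqF //= => /eqP.
Qed.

Lemma no_shared_cross n (p : 'I_n -> point R) col (E : {set 'I_n * 'I_n}) e f :
  general_position p -> bichromatic col E -> e \in E -> f \in E -> f != e ->
  seg_cross (p e.1) (p e.2) (p f.1) (p f.2) ->
  [&& f.1 != e.1, f.1 != e.2, f.2 != e.1 & f.2 != e.2].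
Proof.
move=> [_ gp] bc eE fE fe hc.
have [ce1 ce2] := bc _ eE; have [cf1 cf2] := bc _ fE.
have d12 : e.1 != e.2 by apply: contraNneq ce2 => <-.
have f1e2 : f.1 != e.2 by apply: contraNneq ce2 => <-.
have f2e1 : f.2 != e.1 by apply: contraNneq cf2 => ->.
rewrite f1e2 f2e1 /=; apply/andP; split.
  apply/negP => /eqP h1; move: hc; rewrite h1 => /cross_shared1 ho.
  have f2e2 : e.2 != f.2.
    apply: contraNneq fe => h2; apply/eqP.
    by rewrite [f]surjective_pairing [e]surjective_pairing h1 h2.
  by move: (gp _ _ _ d12 f2e2 (ltac:(by rewrite eq_sym))); rewrite ho eqxx.
apply/negP => /eqP h2; move: hc; rewrite h2 => /cross_shared2 ho.
have f1e1 : e.1 != f.1.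
  apply: contraNneq fe => h1; apply/eqP.
  by rewrite [f]surjective_pairing [e]surjective_pairing h1 h2.
have e2f1 : e.2 != f.1 by rewrite eq_sym.
by move: (gp _ _ _ d12 e2f1 f1e1); rewrite ho eqxx.
Qed.

Lemma iso_connect (T : finType) (r : rel T) v w : (forall u, ~~ r v u) -> connect r v w -> w = v.
Proof.
move=> h /connectP [[|z q]] /=; first by move=> _ ->.
by rewrite (negbTE (h z)).
Qed.

Lemma part1 n : (3 <= n)%N ->
   forall (p : 'I_n -> point R) (col : 'I_n -> bool),
     general_position p ->
     (exists i, col i) -> (exists j, ~~ col j) ->
     forall E : {set 'I_n * 'I_n}, min_bst p col E ->
     forall e, e \in E -> (crossings p E e <= n - 3)%N.
Proof.
move=> hn p col gp _ _ E [[bc [_ acE]] _] e eE.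
rewrite /crossings; set C := [set f in E | _].
have sCE : C \subset E by apply/subsetP => f; rewrite inE => /andP[].
have acC := acyclic_sub sCE acE.
have hfc := forest_card acC.
set K := [set _ | _ : 'I_n] in hfc.
have hC f : f \in C -> [&& f.1 != e.1, f.1 != e.2, f.2 != e.1 & f.2 != e.2].
  rewrite inE => /and3P[fE fe /asboolP hc]; exact: no_shared_cross gp bc eE fE fe hc.
have iso v : (v == e.1) || (v == e.2) -> forall u, ~~ adj C v u.
  move=> hv u; rewrite /adj; apply/negP => /orP[] /hC /and4P[h1 h2 h3 h4];
  by case/orP: hv => /eqP hv; subst v; move: h1 h2 h3 h4 => /=; rewrite ?eqxx.
have [ce1 ce2] := bc _ eE.
have d12 : e.1 != e.2 by apply: contraNneq ce2 => <-.
have [z zin] : exists z, z \in ~: [set e.1; e.2].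
  apply/set0Pn; rewrite -card_gt0.
  have := cardsC [set e.1; e.2]; rewrite card_ord cards2 d12 => h.
  by move: h; set c := #|~: _|; lia.
move: zin; rewrite !inE negb_or => /andP[z1 z2].
pose rho := fingraph.root (adj C).
have rinj x y : (x == e.1) || (x == e.2) -> rho x = rho y -> y = x.
  move=> hx /(fingraph.rootP (adj_sym _)); exact: iso_connect (iso _ hx).
have K3 : (3 <= #|K|)%N.
  have sub : [set rho e.1; rho e.2; rho z] \subset K.
    by apply/subsetP => x; rewrite !inE => /orP[/orP[]|] /eqP ->; apply: imset_f.
  apply: leq_trans (subset_leq_card sub).
  rewrite -setUA cardsU1 cards2 !inE.
  have n12 : rho e.1 != rho e.2 by apply/eqP => /rinj; rewrite eqxx => /(_ isT) /eqP; rewrite eq_sym (negbTE d12).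
  have n1z : rho e.1 != rho z by apply/eqP => /rinj; rewrite eqxx => /(_ isT) /eqP; rewrite (negbTE z1).
  have n2z : rho e.2 != rho z by apply/eqP => /rinj; rewrite eqxx orbT => /(_ isT) /eqP; rewrite (negbTE z2).
  by rewrite (negbTE n12) (negbTE n1z) n2z.
by move: K3 hfc; set k := #|K|; set c := #|C|; lia.
Qed.

End Geo.
Lemma closed_noconn (T : finType) (r : rel T) (A : pred T) x y :
  (forall u v, r u v -> A u -> A v) -> A x -> ~~ A y -> ~~ connect r x y.
Proof.
move=> H ax ay; apply/negP => /connectP [q hq ey].
elim: q x ax hq ey => [|z q IH] x ax /=; first by move=> _ e; move: ay; rewrite e ax.
case/andP => rxz hq ey; exact: IH z (H _ _ rxz ax) hq ey.
Qed.

Section Cons.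
Variable R : realType.
Variable m : nat.
Notation N := m.+3.

Definition tt (i : 'I_N) : R :=
  if nat_of_ord i == 0%N then 4 else if nat_of_ord i == 1%N then -2 else if nat_of_ord i == 2%N then -1
  else (nat_of_ord i)%:R^-1.
Definition pp (i : 'I_N) : point R := (tt i, tt i ^+ 2).
Definition cc (i : 'I_N) : bool := (nat_of_ord i < 2)%N.
Definition o0 : 'I_N := Ordinal (isT : (0 < N)%N).
Definition o1 : 'I_N := Ordinal (isT : (1 < N)%N).
Definition o2 : 'I_N := Ordinal (isT : (2 < N)%N).
Definition EE : {set 'I_N * 'I_N} :=
  [set f | ((nat_of_ord f.1 == 0%N) && (nat_of_ord f.2 == 2%N)) || ((nat_of_ord f.1 == 1%N) && (2 <= nat_of_ord f.2)%N)].

Lemma tt_big (i : 'I_N) : (3 <= nat_of_ord i)%N -> 0 < tt i /\ tt i <= 3^-1.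
Proof.
move=> h; rewrite /tt.
have -> : (nat_of_ord i == 0%N) = false by apply/eqP; lia.
have -> : (nat_of_ord i == 1%N) = false by apply/eqP; lia.
have -> : (nat_of_ord i == 2%N) = false by apply/eqP; lia.
have hp : (0 < i)%N by lia.
have hi : (3%:R <= i%:R :> R) by rewrite ler_nat.
split; first by rewrite invr_gt0 ltr0n.
by rewrite lef_pV2 ?posrE ?ltr0n.
Qed.

Lemma tt_blue (i : 'I_N) : (2 <= nat_of_ord i)%N -> -1 <= tt i <= 3^-1 /\ (tt i = -1 \/ 0 < tt i).
Proof.
move=> h; have [h2|h3] : (nat_of_ord i = 2 \/ 3 <= nat_of_ord i)%N by lia.
  by rewrite /tt h2 /=; split; [lra|left].
have [h4 h5] := tt_big h3; split; [lra|by right].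
Qed.

Lemma tt_cases (k : 'I_N) :
  [\/ nat_of_ord k = 0%N /\ tt k = 4, nat_of_ord k = 1%N /\ tt k = -2,
      nat_of_ord k = 2%N /\ tt k = -1 | (3 <= k)%N /\ tt k = (nat_of_ord k)%:R^-1 /\ 0 < tt k <= 3^-1].
Proof.
have [h|h|h|h] : [\/ nat_of_ord k = 0%N, nat_of_ord k = 1%N, nat_of_ord k = 2%N | (3 <= k)%N].
- case: (nat_of_ord k) => [|[|[|l]]]; by [constructor 1|constructor 2|constructor 3|constructor 4].
- by constructor 1; rewrite /tt h.
- by constructor 2; rewrite /tt h.
- by constructor 3; rewrite /tt h.
constructor 4; split=> //; have [h1 h2] := tt_big h; split; last by rewrite h1 h2.
rewrite /tt.
have -> : (nat_of_ord k == 0%N) = false by apply/eqP; lia.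
have -> : (nat_of_ord k == 1%N) = false by apply/eqP; lia.
by have -> : (nat_of_ord k == 2%N) = false by apply/eqP; lia.
Qed.

Lemma tt_inj : injective tt.
Proof.
move=> i j e; apply/val_inj => /=.
case: (tt_cases i) => [[hi ti]|[hi ti]|[hi ti]|[hi [ti /andP[pi qi]]]];
case: (tt_cases j) => [[hj tj]|[hj tj]|[hj tj]|[hj [tj /andP[pj qj]]]];
rewrite ?hi ?hj // ; try (exfalso; move: e; rewrite ?ti ?tj; lra).
move: e; rewrite ti tj => e; move: (invr_inj e) => /eqP; by rewrite eqr_nat => /eqP.
Qed.



Lemma gp_pp : general_position pp.
Proof.
split; first by move=> i j [] /tt_inj.
move=> i j k ij jk ik.
have -> : orient (pp i) (pp j) (pp k) = (tt j - tt i) * (tt k - tt i) * (tt k - tt j).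
  by rewrite /orient /pp /=; ring.
rewrite !mulf_neq0 // subr_eq0 (inj_eq tt_inj) // eq_sym //.
Qed.

Lemma is_o0 (x : 'I_N) : nat_of_ord x = 0%N -> x = o0. Proof. by move=> h; apply/val_inj. Qed.
Lemma is_o1 (x : 'I_N) : nat_of_ord x = 1%N -> x = o1. Proof. by move=> h; apply/val_inj. Qed.
Lemma is_o2 (x : 'I_N) : nat_of_ord x = 2%N -> x = o2. Proof. by move=> h; apply/val_inj. Qed.

Lemma conn_o1 x : connect (adj EE) o1 x.
Proof.
have : (nat_of_ord x = 0%N \/ nat_of_ord x = 1%N) \/ (2 <= x)%N by lia.
case=> [[h|h]|h].
- rewrite (is_o0 h); apply: (connect_trans (y := o2)); apply: connect1;
  by rewrite /adj !inE /= ?orbT.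
- by rewrite (is_o1 h) connect0.
- by apply: connect1; rewrite /adj !inE /= h ?orbT.
Qed.

Lemma conn_EE : connected_graph EE.
Proof.
move=> x y; apply: (connect_trans (y := o1)); last exact: conn_o1.
by rewrite adj_sym conn_o1.
Qed.

Lemma bc_EE : bichromatic cc EE.
Proof.
move=> f; rewrite inE /cc => /orP[] /andP[/eqP -> h]; split=> //; move: h => /eqP; lia.
Qed.


Lemma acyc_EE : acyclic EE.
Proof.
move=> [g1 g2]; rewrite inE /= => hg.
have key (A : pred 'I_N) x y :
  (forall u v : 'I_N, adj (EE :\ (g1, g2)) u v -> A u -> A v) -> A x -> ~~ A y ->
  ~~ connect (adj (EE :\ (g1, g2))) x y by move=> H ax ay; exact: closed_noconn H ax ay.
have [h|[h|h]] : (nat_of_ord g1 = 0%N /\ nat_of_ord g2 = 2%N) \/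
   ((nat_of_ord g1 = 1%N /\ nat_of_ord g2 = 2%N) \/ (nat_of_ord g1 = 1%N /\ (3 <= g2)%N)).
  by case/orP: hg => /andP[/eqP h1]; [move/eqP|]; lia.
- apply: (key [pred u | nat_of_ord u == 0%N]) => /=; last by lia.
  + move=> u v; rewrite /adj !inE !xpair_eqE -!val_eqE /=.
    by move: h; clear; lia.
  + by lia.
- rewrite /= adj_sym; apply: (key [pred u | (nat_of_ord u == 0%N) || (nat_of_ord u == 2%N)]) => /=; last by lia.
  + move=> u v; rewrite /adj !inE !xpair_eqE -!val_eqE /=.
    by move: h; clear; lia.
  + by lia.
- rewrite /= adj_sym; apply: (key [pred u | nat_of_ord u == nat_of_ord g2]) => /=; last by lia.
  + move=> u v; rewrite /adj !inE !xpair_eqE -!val_eqE /=.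
    by move: h; clear; lia.
  + by lia.
Qed.


Lemma tt0 : tt o0 = 4. Proof. by []. Qed.
Lemma tt1 : tt o1 = -2. Proof. by []. Qed.
Lemma tt2 : tt o2 = -1. Proof. by []. Qed.

Lemma cross_o1 (b : 'I_N) : (3 <= b)%N -> seg_cross (pp o0) (pp o2) (pp o1) (pp b).
Proof.
move=> hb; have [tp tq] := tt_big hb; rewrite /pp tt0 tt1 tt2 /=.
move: tp tq; set u := tt b => tp tq.
have n5 : 5 - u != 0 by apply/eqP => h; lra.
have n2 : u + 2 != 0 by apply/eqP => h; lra.
pose x := (2 * u - 4) / (5 - u).
have hx : x * (5 - u) = 2 * u - 4 by rewrite /x divfK.
pose t := (x + 2) / (u + 2).
have ht : t * (u + 2) = x + 2 by rewrite /t divfK.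
have x1 : -1 < x by nra.
have x2 : x < u by nra.
exists ((4 - x) / 5), t; split.
- apply/andP; split; lra.
- apply/andP; split; nra.
- rewrite /= (_ : t * (u - -2) = t * (u + 2)); last by ring.
  rewrite ht; lra.
- rewrite /=; have -> : t * (u ^+ 2 - (-2) ^+ 2) = (t * (u + 2)) * (u - 2) by ring.
  rewrite ht; nra.
Qed.


Lemma card_B3 : #|[set b : 'I_N | (3 <= b)%N]| = m.
Proof.
have -> : [set b : 'I_N | (3 <= b)%N] = [set (rshift 3 j : 'I_N) | j : 'I_m].
  apply/setP => b; rewrite inE; apply/idP/imsetP => [hb|[j _ ->]]; last by rewrite /= leq_addr.
  have hj : (b - 3 < m)%N by have := ltn_ord b; lia.
  by exists (Ordinal hj) => //; apply/val_inj => /=; lia.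
rewrite card_imset ?card_ord //; move=> i j /(congr1 val) /= h; exact/val_inj/(addnI h).
Qed.

Lemma cross_EE : crossings pp EE (o0, o2) = m.
Proof.
rewrite /crossings.
have -> : [set f in EE | (f != (o0, o2)) &&
            `[< seg_cross (pp (o0, o2).1) (pp (o0, o2).2) (pp f.1) (pp f.2) >]]
          = [set (o1, b) | b in [set b : 'I_N | (3 <= b)%N]].
  apply/setP => -[f1 f2]; rewrite !inE /=; apply/idP/imsetP.
  - case/and3P => fE fne /asboolP hc.
    have fE' : (f1, f2) \in EE by rewrite inE.
    have := no_shared_cross gp_pp bc_EE (_ : (o0, o2) \in EE) fE' fne hc.
    rewrite inE /= => /(_ isT) /and4P[_ _ _ h4].
    move: fE fne h4; rewrite /= xpair_eqE -!val_eqE /= => fE fne h4.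
    have h1 : nat_of_ord f1 = 1%N by lia.
    have h2 : (3 <= f2)%N by lia.
    by exists f2; rewrite ?inE //; rewrite (is_o1 h1).
  - case=> b; rewrite inE => hb [-> ->].
    apply/and3P; split; [by apply/orP; right; rewrite /= ltnW | by rewrite xpair_eqE |].
    by apply/asboolP; exact: cross_o1.
rewrite card_imset ?card_B3 //; by move=> x y [].
Qed.



Lemma dist_a (b : 'I_N) : (2 <= b)%N -> dist (pp o1) (pp b) <= dist (pp o0) (pp b).
Proof.
move=> hb; have [/andP[l u] h] := tt_blue hb.
rewrite /dist; apply: ler_wsqrtr; rewrite /pp tt0 tt1 /=; nra.
Qed.

Lemma dist_b (b : 'I_N) : (2 <= b)%N -> dist (pp o0) (pp o2) <= dist (pp o0) (pp b).
Proof.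
move=> hb; have [/andP[l u] [h|h]] := tt_blue hb.
  by rewrite /pp tt2 h.
rewrite /dist; apply: ler_wsqrtr; rewrite /pp tt0 tt2 /=; nra.
Qed.

Definition B2 : {set 'I_N} := [set b : 'I_N | (2 <= b)%N].

Lemma weight_EE : weight pp EE = dist (pp o0) (pp o2) + \sum_(b in B2) dist (pp o1) (pp b).
Proof.
have -> : EE = (o0, o2) |: [set (o1, b) | b in B2].
  apply/setP => -[f1 f2]; rewrite !inE /= xpair_eqE; apply/idP/idP.
  - case/orP => /andP[/eqP h1 h2].
      by rewrite (is_o0 h1) (is_o2 (eqP h2)) !eqxx.
    by apply/orP; right; apply/imsetP; exists f2; rewrite ?inE // (is_o1 h1).
  - case/orP => [/andP[/eqP -> /eqP ->] //|/imsetP[b]]; rewrite inE => hb [-> ->].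
    by apply/orP; right.
rewrite /weight big_setU1 /=; last first.
  by apply/imsetP => -[b _ [h _]].
by rewrite big_imset //= => x y _ _ [].
Qed.


Lemma red_cases (u : 'I_N) : cc u -> u = o0 \/ u = o1.
Proof.
rewrite /cc => h; have [h0|h1] : nat_of_ord u = 0%N \/ nat_of_ord u = 1%N by lia.
  by left; apply: is_o0.
by right; apply: is_o1.
Qed.

Lemma min_EE E' : bst cc E' -> weight pp EE <= weight pp E'.
Proof.
case=> bc [conn _].
pose g b := if (o1, b) \in E' then (o1, b) else (o0, b).
have hg (b : 'I_N) : (2 <= b)%N -> g b \in E'.
  move=> hb; case: (pickP (adj E' b)) => [u hu|none].
    case/orP: hu => h.
      by have [] := bc _ h; rewrite /cc /=; lia.
    have [hu _] := bc _ h; case: (red_cases hu) => /= eu; rewrite /g; case: ifP => // h1.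
      by rewrite -eu.
    by rewrite -eu h in h1.
  have := iso_connect (fun u => negbT (none u)) (conn b o0).
  by move/(congr1 val) => /=; lia.
have [bs hbs /andP[h0 h1]] : exists2 bs : 'I_N, (2 <= bs)%N & ((o0, bs) \in E') && ((o1, bs) \in E').
  case: (pickP [pred b | ((o0, b) \in E') && ((o1, b) \in E')]) => [bs /= hb | none].
    exists bs => //; case/andP: hb => hb _; have [_] := bc _ hb; rewrite /cc /=; lia.
  exfalso; suff: ~~ connect (adj E') o0 o1 by rewrite conn.
  apply: (closed_noconn (A := [pred x | (x == o0) || ((o0, x) \in E')])) => /=.
  - move=> u v; rewrite /adj => /orP[] huv /orP[/eqP eu|hu].
    + by rewrite -eu huv orbT.
    + by have [_ h1] := bc _ hu; have [h2 _] := bc _ huv; rewrite /= h2 in h1.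
    + by have [_ h2] := bc _ huv; rewrite /= eu in h2.
    + have [hv _] := bc _ huv; case: (red_cases hv) => /= ev; first by rewrite ev eqxx.
      by move: (none u) => /=; rewrite hu -ev huv.
  - by [].
  - by apply/negP => h; have [_] := bc _ h.
pose S := (o0, bs) |: [set g b | b in B2].
have sS : S \subset E'.
  apply/subsetP => f; rewrite !inE => /orP[/eqP -> //|/imsetP[b]].
  by rewrite inE => hb ->; exact: hg.
have nS : (o0, bs) \notin [set g b | b in B2].
  apply/imsetP => -[b _]; rewrite /g; case: ifP => [_ [h _]|hb [eb]]; first by [].
  by rewrite -eb h1 in hb.
have ginj : {in B2 &, injective g}.
  by move=> x y _ _; rewrite /g; case: ifP; case: ifP => _ _ [].
apply: (@le_trans _ _ (\sum_(f in S) dist (pp f.1) (pp f.2))); last first.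
  rewrite /weight [X in _ <= X](big_setID S) /= (setIidPr sS) lerDl.
  by apply: sumr_ge0 => i _; exact: sqrtr_ge0.
rewrite weight_EE big_setU1 //= big_imset //=.
apply: lerD; first exact: dist_b.
apply: ler_sum => b; rewrite inE => hb; rewrite /g; case: ifP => //= _.
exact: dist_a.
Qed.

End Cons.

Theorem proposition7 (R : realType) :
  (forall (n : nat), (3 <= n)%N ->
   forall (p : 'I_n -> point R) (col : 'I_n -> bool),
     general_position p ->
     (exists i, col i) -> (exists j, ~~ col j) ->
     forall E : {set 'I_n * 'I_n}, min_bst p col E ->
     forall e, e \in E -> (crossings p E e <= n - 3)%N)
  /\
  (forall (n : nat), (3 <= n)%N ->
   exists (p : 'I_n -> point R) (col : 'I_n -> bool) (E : {set 'I_n * 'I_n}) e,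
     [/\ general_position p, (exists i, col i) /\ (exists j, ~~ col j),
         min_bst p col E, e \in E & crossings p E e = (n - 3)%N]).
Proof.
split; first exact: part1.
move=> n; case: n => [|[|[|m]]] // _.
exists (@pp R m), (@cc m), (@EE m), (@o0 m, @o2 m); split.
- exact: gp_pp.
- by split; [exists (@o0 m) | exists (@o2 m)].
- split; first by split; [exact: bc_EE | split; [exact: conn_EE | exact: acyc_EE]].
  exact: min_EE.
- by rewrite inE.
- by rewrite cross_EE -addn3 addnK.
Qed.
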